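(* There is an absolute constant $C$ such that the following holds. Let $0<\epsilon\le1$, let $X\subset\mathbb{R}^2$ be a finite set of points with pairwise distinct $x$-coordinates, and let $A\subseteq X$ be an $\epsilon$-approximation for $X$ with respect to the ranges given by parallelograms (intersections of two closed slabs, each slab being the region between two parallel lines), with $|A|\ge\max(2,1/\epsilon)$. Then for every real slope $s$, $|\rho_X(s)-\rho_A(s)|\le C\epsilon^{1/3}$.
   Context: For a finite set $Y\subset\mathbb{R}^2$ with $|Y|\ge2$ and pairwise distinct $x$-coordinates, and a real number $s$, $\rho_Y(s)$ denotes the number of unordered pairs $\{a,b\}\subseteq Y$, $a\ne b$, such that the line through $a$ and $b$ has slope less than $s$, divided by $\binom{|Y|}{2}$ (the normalized position of $s$ in the sorted sequence of pairwise slopes). For a finite set $X$ and a family $\mathcal{R}$ of subsets of the plane, $A\subseteq X$ is an $\epsilon$-approximation for $X$ with respect to $\mathcal{R}$ if $\left|\frac{|A\cap R|}{|A|}-\frac{|X\cap R|}{|X|}\right|\le\epsilon$ for every $R\in\mathcal{R}$. *)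

(* Defs.v *)
From Stdlib Require Import Rdefinitions.
From HB Require Import structures.
From mathcomp Require Import all_boot all_order all_algebra.
From mathcomp Require Import all_classical all_reals.
From mathcomp Require Import Rstruct exp.
Set Implicit Arguments. Unset Strict Implicit. Unset Printing Implicit Defensive.
Import Order.TTheory GRing.Theory Num.Theory.
Local Open Scope ring_scope.

Notation pt2 := (R * R)%type.

Definition slope (a b : pt2) : R := (b.2 - a.2) / (b.1 - a.1).

Definition npairs_below (Y : seq pt2) (s : R) : nat :=
  \sum_(i < size Y) \sum_(j < size Y | (i < j)%N)
     nat_of_bool (slope (nth (0%R,0%R) Y i) (nth (0%R,0%R) Y j) < s)%R.

Definition rho (Y : seq pt2) (s : R) : R :=
  (npairs_below Y s)%:R / ('C(size Y, 2))%:R.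

Definition slab (u : pt2) (c1 c2 : R) (p : pt2) : bool :=
  (c1 <= u.1 * p.1 + u.2 * p.2) && (u.1 * p.1 + u.2 * p.2 <= c2).

Definition is_slab (S : pt2 -> bool) : Prop :=
  exists (u : pt2) (c1 c2 : R), u != (0%R, 0%R) /\ c1 < c2 /\ S = slab u c1 c2.

Definition is_parallelogram_range (P : pt2 -> bool) : Prop :=
  exists S1 S2, is_slab S1 /\ is_slab S2 /\ P = (fun p => S1 p && S2 p).

Definition eps_approx (eps : R) (A X : seq pt2) : Prop :=
  forall P : pt2 -> bool, is_parallelogram_range P ->
    `| (count P A)%:R / (size A)%:R - (count P X)%:R / (size X)%:R | <= eps.

(* Main.v *)
Require Import Defs.
From Stdlib Require Import Rdefinitions.
From HB Require Import structures.
From mathcomp Require Import all_boot all_order all_algebra.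
From mathcomp Require Import all_classical all_reals.
From mathcomp Require Import Rstruct exp.
From mathcomp Require Import lra ring zify.
Local Open Scope ring_scope.
Import Order.TTheory GRing.Theory Num.Theory.
Local Open Scope ring_scope.

Definition yp (s : R) (q : pt2) : R := q.2 - s * q.1.
Definition Dq (s : R) (p q : pt2) : bool := (p.1 < q.1) && (yp s q < yp s p).
Definition convexR (I : R -> bool) :=
  forall a b c : R, a <= b -> b <= c -> I a -> I c -> I b.

Lemma count_le3 (T : Type) (f g h : pred T) (s : seq T) :
  (forall x, (f x <= g x + h x)%N) -> (count f s <= count g s + count h s)%N.
Proof. move=> H; elim: s => //= x s IH; have := H x; lia. Qed.

Lemma count_eq3 (T : Type) (f g h : pred T) (s : seq T) :
  (forall x, (f x : nat) = g x + h x)%N -> (count f s = count g s + count h s)%N.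
Proof. move=> H; elim: s => //= x s IH; have := H x; lia. Qed.

Lemma div_eq_lt (a b n k : nat) : (0 < n)%N -> (a <= b)%N ->
  ((k*a) %/ n = (k*b) %/ n)%N -> (k*(b - a) < n)%N.
Proof.
move=> Hn Hab E.
have h1 := divn_eq (k*a) n. have h2 := divn_eq (k*b) n.
have h3 := ltn_pmod (k*a) Hn. have h4 := ltn_pmod (k*b) Hn.
rewrite mulnBr. lia.
Qed.

Lemma gap_up (V : seq R) (b : R) :
  exists c, b < c /\ forall v, v \in V -> b < v -> c < v.
Proof.
elim: V => [|v V [c [hc H]]]; first by exists (b+1); split=> //; lra.
case: (ltP b v) => hv.
- exists (Num.min c ((b+v)/2)); split.
    by rewrite lt_min hc /=; lra.
  move=> w; rewrite inE => /orP [/eqP -> _|wV bw].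
    by rewrite gt_min; apply/orP; right; lra.
  by rewrite gt_min (H _ wV bw).
- exists c; split => // w; rewrite inE => /orP [/eqP -> h|wV bw]; first lra.
  exact: H.
Qed.

Lemma gap_down (V : seq R) (a : R) :
  exists c, c < a /\ forall v, v \in V -> v < a -> v < c.
Proof.
elim: V => [|v V [c [hc H]]]; first by exists (a-1); split=> //; lra.
case: (ltP v a) => hv.
- exists (Num.max c ((a+v)/2)); split.
    by rewrite gt_max hc /=; lra.
  move=> w; rewrite inE => /orP [/eqP -> _|wV bw].
    by rewrite lt_max; apply/orP; right; lra.
  by rewrite lt_max (H _ wV bw).
- exists c; split => // w; rewrite inE => /orP [/eqP -> h|wV bw]; first lra.
  exact: H.
Qed.

Lemma seq_min (W : seq R) : W != [::] ->
  exists2 a, a \in W & forall w, w \in W -> a <= w.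
Proof.
elim: W => // v W IH _; case: W IH => [|u W] IH.
  by exists v; rewrite ?inE ?eqxx // => w; rewrite inE => /eqP ->.
have [a aW Ha] := IH isT.
case: (lerP v a) => h.
- exists v; first by rewrite inE eqxx.
  move=> w; rewrite inE => /orP [/eqP ->//|/Ha]; lra.
- exists a; first by rewrite inE aW orbT.
  move=> w; rewrite inE => /orP [/eqP ->|/Ha] //; lra.
Qed.

Lemma seq_max (W : seq R) : W != [::] ->
  exists2 a, a \in W & forall w, w \in W -> w <= a.
Proof.
elim: W => // v W IH _; case: W IH => [|u W] IH.
  by exists v; rewrite ?inE ?eqxx // => w; rewrite inE => /eqP ->.
have [a aW Ha] := IH isT.
case: (lerP a v) => h.
- exists v; first by rewrite inE eqxx.
  move=> w; rewrite inE => /orP [/eqP ->//|/Ha]; lra.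
- exists a; first by rewrite inE aW orbT.
  move=> w; rewrite inE => /orP [/eqP ->|/Ha] //; lra.
Qed.

Lemma ub_exists (V : seq R) : exists M, forall v, v \in V -> v < M.
Proof.
elim: V => [|v V [M H]]; first by exists 0.
exists (`|M| + `|v| + 1) => w; rewrite inE => /orP [/eqP ->|/H].
  have := ler_norm v; have := normr_ge0 M; lra.
have := ler_norm M; have := normr_ge0 v; lra.
Qed.

Lemma convex_closed (I : R -> bool) (V : seq R) : convexR I ->
  exists c1 c2, c1 < c2 /\ forall v, v \in V -> I v = (c1 <= v <= c2).
Proof.
move=> HI.
case E: (seq.filter I V == [::]).
- have [M HM] := ub_exists V.
  exists M, (M+1); split; first lra.
  move=> v vV.
  have -> : I v = false.
    apply/negbTE/negP => Iv.
    by move/eqP: E => E; have := mem_filter I v V; rewrite E Iv vV.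
  by have := HM v vV; case: (lerP M v) => //; lra.
- have NE : seq.filter I V != [::] by rewrite E.
  have [a aW Ha] := @seq_min _ NE.
  have [b bW Hb] := @seq_max _ NE.
  have [c1 [hc1 Hc1]] := gap_down V a.
  have [c2 [hc2 Hc2]] := gap_up V b.
  move: aW bW; rewrite !mem_filter => /andP [Ia aV] /andP [Ib bV].
  have hab : a <= b by apply: Ha; rewrite mem_filter Ib bV.
  exists c1, c2; split; first lra.
  move=> v vV.
  case Iv: (I v).
    have hvW : v \in seq.filter I V by rewrite mem_filter Iv vV.
    have := Ha _ hvW; have := Hb _ hvW; move=> h1 h2.
    by apply/esym/andP; split; lra.
  apply/esym/negbTE/negP => /andP [h1 h2].
  case: (ltP v a) => hva; first by have := Hc1 _ vV hva; lra.
  case: (ltP b v) => hbv; first by have := Hc2 _ vV hbv; lra.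
  by move: Iv; rewrite (HI a v b) .
Qed.

Lemma para_exists (s : R) (X : seq pt2) (I1 I2 : R -> bool) :
  convexR I1 -> convexR I2 ->
  exists P, is_parallelogram_range P /\
    forall q, q \in X -> P q = I1 q.1 && I2 (yp s q).
Proof.
move=> H1 H2.
have [c1 [c2 [hc Hc]]] := @convex_closed I1 (map fst X) H1.
have [d1 [d2 [hd Hd]]] := @convex_closed I2 (map (yp s) X) H2.
exists (fun p => slab (1,0) c1 c2 p && slab (-s,1) d1 d2 p); split.
  exists (slab (1,0) c1 c2), (slab (-s,1) d1 d2); split; last split => //.
    by exists (1,0), c1, c2; split => //; rewrite xpair_eqE oner_eq0.
  by exists (-s,1), d1, d2; split => //; rewrite xpair_eqE oner_eq0 andbF.
move=> q qX; rewrite /slab /=.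
rewrite mul1r mul0r addr0 (Hc q.1) ?map_f //.
have -> : -s * q.1 + 1 * q.2 = yp s q by rewrite /yp mul1r mulNr addrC.
by rewrite (Hd (yp s q)) ?map_f.
Qed.

Lemma approx_conv (s eps : R) (A X : seq pt2) (I1 I2 : R -> bool) :
  convexR I1 -> convexR I2 -> {subset A <= X} -> eps_approx eps A X ->
  `| (count (fun q => I1 q.1 && I2 (yp s q)) A)%:R / (size A)%:R
     - (count (fun q => I1 q.1 && I2 (yp s q)) X)%:R / (size X)%:R | <= eps.
Proof.
move=> H1 H2 sub Hap.
have [P [HP HPX]] := @para_exists s X I1 I2 H1 H2.
rewrite -(eq_in_count (a1 := P)); last by move=> q /sub /HPX.
rewrite -(eq_in_count (a1 := P)); last by move=> q /HPX.
exact: Hap.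
Qed.

Lemma fam_bound (P : R -> pred pt2) (X : seq pt2) (k n : nat) (v w : R) :
  (0 < n)%N -> (forall v w q, v <= w -> P v q -> P w q) ->
  ((k * count (P v) X) %/ n = (k * count (P w) X) %/ n)%N ->
  (k * count (fun q => P v q != P w q) X < n)%N.
Proof.
move=> Hn Hm.
wlog hvw : v w / v <= w.
  move=> H E; case: (lerP v w) => h; first exact: H.
  rewrite (eq_count (a2 := fun q => P w q != P v q)); last by move=> q; rewrite eq_sym.
  by apply: H; [exact: ltW | rewrite E].
move=> E.
have Hc : count (P w) X = (count (P v) X + count (fun q => P v q != P w q) X)%N.
  apply: count_eq3 => q; have := Hm v w q hvw.
  by case: (P v q); case: (P w q) => //= /(_ isT).
have := @div_eq_lt (count (P v) X) (count (P w) X) n k Hn _ E.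
rewrite {2}Hc addKn; apply; rewrite Hc; lia.
Qed.

Definition ixf (X : seq pt2) (k : nat) (p : pt2) : nat :=
  (k * count (fun q => q.1 <= p.1) X) %/ size X.
Definition iyf (s : R) (X : seq pt2) (k : nat) (p : pt2) : nat :=
  (k * count (fun q => yp s q < yp s p) X) %/ size X.

Lemma var_bound s X k p r : (0 < size X)%N ->
  ixf X k p = ixf X k r -> iyf s X k p = iyf s X k r ->
  (k * count (fun q => Dq s p q != Dq s r q) X < 2 * size X)%N.
Proof.
move=> Hn Ex Ey.
have h1 := @fam_bound (fun v q => q.1 <= v) X k (size X) p.1 r.1 Hn
  (fun v w q h1 h2 => le_trans h2 h1) Ex.
have h2 := @fam_bound (fun v q => yp s q < v) X k (size X) (yp s p) (yp s r) Hn
  (fun v w q h1 h2 => lt_le_trans h2 h1) Ey.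
have h3 := @count_le3 _ (fun q => Dq s p q != Dq s r q)
  (fun q => (q.1 <= p.1) != (q.1 <= r.1))
  (fun q => (yp s q < yp s p) != (yp s q < yp s r)) X.
apply: (leq_ltn_trans (leq_mul (leqnn k) (h3 _))).
  move=> q; rewrite /Dq !ltNge.
  by case: (q.1 <= p.1)%R; case: (q.1 <= r.1)%R;
   case: (yp s p <= yp s q)%R; case: (yp s r <= yp s q)%R.
simpl in h1, h2; rewrite mulnDr; lia.
Qed.
Lemma norm_cnt (a b c : nat) : (a <= b + c)%N -> (b <= a + c)%N ->
  `|a%:R - b%:R| <= c%:R :> R.
Proof.
move=> h1 h2; rewrite ler_norml; apply/andP; split.
  by move: h2; rewrite -(ler_nat R) natrD; lra.
by move: h1; rewrite -(ler_nat R) natrD; lra.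
Qed.

Definition gX (s : R) (X : seq pt2) (p : pt2) : R :=
  (count (Dq s p) X)%:R / (size X)%:R.

Lemma g_var s X k p r : (0 < size X)%N -> (0 < k)%N ->
  ixf X k p = ixf X k r -> iyf s X k p = iyf s X k r ->
  `|gX s X p - gX s X r| <= 2 / k%:R.
Proof.
move=> Hn Hk Ex Ey.
have hv := @var_bound s X k p r Hn Ex Ey.
set c := count (fun q => Dq s p q != Dq s r q) X in hv.
have hn : 0 < (size X)%:R :> R by rewrite ltr0n.
have hk : 0 < k%:R :> R by rewrite ltr0n.
have hb : `|(count (Dq s p) X)%:R - (count (Dq s r) X)%:R| <= c%:R :> R.
  apply: norm_cnt; apply: count_le3 => q;
  by case: (Dq s p q); case: (Dq s r q).
rewrite /gX -mulrBl normrM [`|_^-1|]gtr0_norm ?invr_gt0 //.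
have hi : 0 <= (size X)%:R^-1 :> R by rewrite invr_ge0 ltW.
apply: (le_trans (ler_wpM2r hi hb)).
rewrite ler_pdivrMr // mulrAC ler_pdivlMr //.
have : (c * k < 2 * size X)%N by rewrite mulnC.
rewrite -(ltr_nat R) !natrM => h; apply: ltW; lra.
Qed.

Lemma part_sum (Y : seq pt2) (F : pt2 -> R) (fi fj : pt2 -> nat) (K : nat) :
  (forall p, fi p < K)%N -> (forall p, fj p < K)%N ->
  \sum_(p <- Y) F p = \sum_(i < K) \sum_(j < K)
     \sum_(p <- Y | (fi p == i) && (fj p == j)) F p.
Proof.
move=> Hi Hj.
have E : forall p, F p = \sum_(i < K) \sum_(j < K)
    (if (fi p == i) && (fj p == j) then F p else 0).
  move=> p; rewrite (bigD1 (Ordinal (Hi p))) //= [X in _ + X]big1; last first.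
    move=> i ne; apply: big1 => j _.
    have -> : (fi p == i) = false.
      apply/negbTE/negP => /eqP e; move: ne.
      have -> : i = Ordinal (Hi p) by apply: val_inj; rewrite /= e.
      by rewrite eqxx.
    by [].
  rewrite addr0 (bigD1 (Ordinal (Hj p))) //= !eqxx /= big1 ?addr0 // => j /negbTE ne.
  have -> : (fj p == j) = false.
    by apply: negbTE; apply: contraFN ne => /eqP e; apply/eqP/val_inj; rewrite /= e.
  by [].
rewrite (eq_bigr _ (fun p _ => E p)).
rewrite exchange_big /=; apply: eq_bigr => i _.
rewrite exchange_big /=; apply: eq_bigr => j _.
by rewrite [RHS]big_mkcond.
Qed.

Lemma sum_cond_const (Y : seq pt2) (Q : pred pt2) (c : R) :
  \sum_(p <- Y | Q p) c = (count Q Y)%:R * c.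
Proof.
elim: Y => [|a Y IH]; first by rewrite big_nil mul0r.
rewrite big_cons /=; case: (Q a); rewrite IH //=.
by rewrite natrD mulrDl mul1r.
Qed.

Lemma cell_bound (A X : seq pt2) (Q : pred pt2) (g : pt2 -> R) (eps d : R) :
  (0 < size A)%N -> (0 < size X)%N -> {subset A <= X} ->
  `|(count Q A)%:R / (size A)%:R - (count Q X)%:R / (size X)%:R| <= eps ->
  (forall p r, p \in X -> r \in X -> Q p -> Q r -> `|g p - g r| <= d) ->
  (forall p, 0 <= g p <= 1) ->
  `|(\sum_(p <- A | Q p) g p) / (size A)%:R
    - (\sum_(p <- X | Q p) g p) / (size X)%:R|
    <= eps + d * ((count Q A)%:R / (size A)%:R + (count Q X)%:R / (size X)%:R).
Proof.
move=> hm hn sub He Hg H01.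
have he : 0 <= eps := le_trans (normr_ge0 _) He.
have hm' : 0 < (size A)%:R :> R by rewrite ltr0n.
have hn' : 0 < (size X)%:R :> R by rewrite ltr0n.
case: (boolP (has Q X)) => hQ; last first.
  have hQA : ~~ has Q A.
    apply: contra hQ => /hasP [p pA Qp]; apply/hasP; exists p => //; exact: sub.
  move: (hQ) (hQA); rewrite !has_count !lt0n !negbK => /eqP -> /eqP ->.
  rewrite !big_hasC // !mul0r subrr normr0 addr0 mulr0 addr0 //.
have [r rX Qr] := hasP hQ.
set h := g r.
have Sp : forall Y, \sum_(p <- Y | Q p) g p =
    (count Q Y)%:R * h + \sum_(p <- Y | Q p) (g p - h).
  move=> Y; rewrite -sum_cond_const -big_split /=.
  by apply: eq_bigr => p _; rewrite addrC subrK.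
have Bd : forall Y, {subset Y <= X} ->
    `|\sum_(p <- Y | Q p) (g p - h)| <= (count Q Y)%:R * d.
  move=> Y sY; rewrite -sum_cond_const.
  apply: le_trans (ler_norm_sum _ _ _) _.
  rewrite big_seq_cond [X in _ <= X]big_seq_cond.
  apply: ler_sum => p /andP [pY Qp]; exact: Hg p r (sY p pY) rX Qp Qr.
have BA := Bd A sub.
have BX := Bd X (fun x h => h).
rewrite !Sp.
set SA := \sum_(p <- A | Q p) (g p - h) in BA *.
set SX := \sum_(p <- X | Q p) (g p - h) in BX *.
set cA := (count Q A)%:R in BA He *.
set cX := (count Q X)%:R in BX He *.
set m := (size A)%:R in hm' He *.
set n := (size X)%:R in hn' He *.
have h01 := H01 r; rewrite -/h in h01.
have e1 : `|h * (cA / m - cX / n)| <= eps.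
  rewrite normrM -[eps]mul1r; apply: ler_pM; rewrite ?normr_ge0 //.
  by case/andP: h01 => h0 h1; rewrite ger0_norm.
have e2 : `|SA / m| <= d * (cA / m).
  rewrite normrM [`|_^-1|]ger0_norm; last by rewrite invr_ge0 ltW.
  rewrite mulrA [d * cA]mulrC; apply: ler_wpM2r => //.
  by rewrite invr_ge0 ltW.
have e3 : `|SX / n| <= d * (cX / n).
  rewrite normrM [`|_^-1|]ger0_norm; last by rewrite invr_ge0 ltW.
  rewrite mulrA [d * cX]mulrC; apply: ler_wpM2r => //.
  by rewrite invr_ge0 ltW.
have -> : (cA * h + SA) / m - (cX * h + SX) / n =
   h * (cA / m - cX / n) + (SA / m - SX / n) by ring.
apply: le_trans (ler_normD _ _) _.
have := ler_normB (SA / m) (SX / n).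
rewrite [d * _]mulrDr; lra.
Qed.

Lemma sum2_lin (K : nat) (e d : R) (a b : 'I_K -> 'I_K -> R) :
  \sum_(i < K) \sum_(j < K) (e + d * (a i j + b i j)) =
  (K * K)%:R * e + d * (\sum_(i < K) \sum_(j < K) a i j
                        + \sum_(i < K) \sum_(j < K) b i j).
Proof.
have E1 : forall i, \sum_(j < K) (e + d * (a i j + b i j)) =
    K%:R * e + d * (\sum_(j < K) a i j + \sum_(j < K) b i j).
  move=> i; rewrite big_split /= sumr_const card_ord; congr (_ + _).
    by rewrite mulr_natl.
  by rewrite mulrDr !mulr_sumr -big_split /=; apply: eq_bigr => j _; rewrite mulrDr.
rewrite (eq_bigr _ (fun i _ => E1 i)) big_split /= sumr_const card_ord.
rewrite -mulr_sumr -big_split /= -mulr_natl natrM; ring.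
Qed.

Lemma sum1_size (Y : seq pt2) : \sum_(p <- Y) (1 : R) = (size Y)%:R.
Proof.
elim: Y => [|a Y IH]; first by rewrite big_nil.
by rewrite big_cons IH /= -add1n natrD.
Qed.

Lemma conv_mono (f : R -> nat) (i : nat) :
  (forall a b, a <= b -> (f a <= f b)%N) -> convexR (fun v => f v == i).
Proof.
move=> Hf a b c hab hbc /eqP ha /eqP hc.
have := Hf _ _ hab; have := Hf _ _ hbc; move=> h1 h2; apply/eqP; lia.
Qed.

Lemma idx_lt (k c n : nat) : (0 < n)%N -> (c <= n)%N -> ((k * c) %/ n < k.+1)%N.
Proof.
move=> hn hc; rewrite ltnS.
have := leq_div2r n (leq_mul (leqnn k) hc); rewrite mulnK //.
Qed.

Lemma grid_bound (s eps : R) (A X : seq pt2) (k : nat) :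
  (0 < size A)%N -> (0 < size X)%N -> (0 < k)%N -> {subset A <= X} ->
  eps_approx eps A X ->
  `|(\sum_(p <- A) gX s X p) / (size A)%:R
    - (\sum_(p <- X) gX s X p) / (size X)%:R|
    <= (k.+1 * k.+1)%:R * eps + 4 / k%:R.
Proof.
move=> hm hn hk sub Hap.
have hm' : 0 < (size A)%:R :> R by rewrite ltr0n.
have hn' : 0 < (size X)%:R :> R by rewrite ltr0n.
have Hi : forall p, (ixf X k p < k.+1)%N.
  by move=> p; apply: idx_lt => //; exact: count_size.
have Hj : forall p, (iyf s X k p < k.+1)%N.
  by move=> p; apply: idx_lt => //; exact: count_size.
pose d : R := 2 / k%:R.
set Q := fun (i j : 'I_k.+1) p => (ixf X k p == i) && (iyf s X k p == j).
have Hcell : forall i j : 'I_k.+1,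
  `|(\sum_(p <- A | Q i j p) gX s X p) / (size A)%:R
    - (\sum_(p <- X | Q i j p) gX s X p) / (size X)%:R|
    <= eps + d * ((count (Q i j) A)%:R / (size A)%:R
                  + (count (Q i j) X)%:R / (size X)%:R).
  move=> i j; apply: cell_bound => //.
  - have Hc1 : convexR (fun v => ((k * count (fun q => (q.1 <= v)%R) X) %/ size X)%N == i).
      apply: conv_mono => a b hab; apply: leq_div2r; apply: leq_mul => //.
      by apply: sub_count => q /= h; exact: le_trans h hab.
    have Hc2 : convexR (fun v => ((k * count (fun q => (yp s q < v)%R) X) %/ size X)%N == j).
      apply: conv_mono => a b hab; apply: leq_div2r; apply: leq_mul => //.
      by apply: sub_count => q /= h; exact: lt_le_trans h hab.
    exact (@approx_conv s eps A X _ _ Hc1 Hc2 sub Hap).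
  - move=> p r _ _ /andP [/eqP e1 /eqP e2] /andP [/eqP e3 /eqP e4].
    apply: g_var => //; congruence.
  - move=> p; rewrite /gX; apply/andP; split.
      by rewrite divr_ge0 // ler0n.
    by rewrite ler_pdivrMr // mul1r ler_nat count_size.
rewrite (@part_sum A (gX s X) _ _ _ Hi Hj) (@part_sum X (gX s X) _ _ _ Hi Hj).
rewrite mulr_suml [X in _ - X]mulr_suml -sumrB.
under eq_bigr => i _ do rewrite mulr_suml [X in _ - X]mulr_suml -sumrB.
apply: le_trans (ler_norm_sum _ _ _) _.
apply: le_trans (ler_sum _ (fun i _ => ler_norm_sum _ _ _)) _.
apply: le_trans (ler_sum _ (fun i _ => ler_sum _ (fun j _ => Hcell i j))) _.
rewrite sum2_lin.
have cnt : forall Y : seq pt2, (0 < size Y)%N ->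
   \sum_(i < k.+1) \sum_(j < k.+1) ((count (Q i j) Y)%:R / (size Y)%:R) = 1 :> R.
  move=> Y hY.
  have E' : \sum_(i < k.+1) \sum_(j < k.+1) (count (Q i j) Y)%:R = (size Y)%:R :> R.
    rewrite -sum1_size (@part_sum Y (fun _ => 1) _ _ _ Hi Hj).
    by apply: eq_bigr => i _; apply: eq_bigr => j _; rewrite sum_cond_const mulr1.
  under eq_bigr => i _ do rewrite -mulr_suml.
  by rewrite -mulr_suml E' divff // pnatr_eq0 -lt0n.
rewrite (cnt A hm) (cnt X hn) /d.
have -> : 2 / k%:R * (1 + 1) = 4 / k%:R :> R by ring.
by [].
Qed.

Lemma slope_sym (a b : pt2) : slope a b = slope b a.
Proof.
rewrite /slope !RdivE !RminusE -[b.2 - a.2]opprB -[b.1 - a.1]opprB invrN mulrNN //.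
Qed.

Lemma slope_lt (s : R) (a b : pt2) : a.1 < b.1 ->
  (slope a b < s) = (yp s b < yp s a).
Proof.
move=> h; rewrite /slope RdivE !RminusE ltr_pdivrMr ?subr_gt0 // /yp !RminusE !RmultE mulrBr.
by apply/idP/idP => H; lra.
Qed.

Lemma slope_D (s : R) (a b : pt2) : a.1 != b.1 ->
  nat_of_bool (slope a b < s)%R = (nat_of_bool (Dq s a b) + nat_of_bool (Dq s b a))%N.
Proof.
move=> hne; rewrite /Dq.
case: (ltgtP a.1 b.1) => h.
- by rewrite slope_lt //= addn0.
- by rewrite slope_sym slope_lt.
- by move: hne; rewrite h eqxx.
Qed.

Lemma npairs_count (Y : seq pt2) (s : R) : uniq (map fst Y) ->
  npairs_below Y s = (\sum_(p <- Y) count (Dq s p) Y)%N.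
Proof.
move=> hu.
pose y (i : 'I_(size Y)) := nth (0,0) Y i.
pose F (i j : 'I_(size Y)) := (Dq s (y i) (y j) : nat).
have hx : forall i j : 'I_(size Y), i != j -> (y i).1 != (y j).1.
  move=> i j ne; rewrite /y -(nth_map (0,0) 0) // -(nth_map (0,0) 0) //.
  by rewrite (nth_uniq 0 _ _ hu) ?size_map.
have L : npairs_below Y s =
    (\sum_(i < size Y) \sum_(j < size Y) ((i < j) * (F i j + F j i)))%N.
  rewrite /npairs_below; apply: eq_bigr => i _; rewrite big_mkcond /=.
  apply: eq_bigr => j _; case: ltnP => h; rewrite ?mul1n ?mul0n //.
  rewrite (@slope_D s (y i) (y j) (hx i j _)) //.
  by apply/eqP => e; move: h; rewrite e ltnn.
have R1 : (\sum_(p <- Y) count (Dq s p) Y =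
    \sum_(i < size Y) \sum_(j < size Y) F i j)%N.
  rewrite (big_nth (0,0)) big_mkord; apply: eq_bigr => i _.
  by rewrite -sum1_count big_mkcond (big_nth (0,0)) big_mkord.
have E1 : (\sum_(i < size Y) \sum_(j < size Y) F i j =
    \sum_(i < size Y) \sum_(j < size Y) ((i < j) * F i j)
    + \sum_(i < size Y) \sum_(j < size Y) ((j < i) * F i j))%N.
  rewrite -big_split; apply: eq_bigr => i _; rewrite -big_split.
  apply: eq_bigr => j _ /=.
  case: (ltngtP i j) => h; rewrite ?mul1n ?mul0n ?addn0 //.
  have -> : j = i by apply: val_inj.
  by rewrite /F /Dq ltxx.
have E2 : (\sum_(i < size Y) \sum_(j < size Y) ((j < i) * F i j) =
    \sum_(i < size Y) \sum_(j < size Y) ((i < j) * F j i))%N.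
  by rewrite exchange_big.
rewrite L R1 E1 E2 -big_split; apply: eq_bigr => i _.
rewrite -big_split; apply: eq_bigr => j _ /=.
by rewrite mulnDr.
Qed.

Lemma uniq_fst_inj (X : seq pt2) : uniq (map fst X) -> {in X &, injective fst}.
Proof.
elim: X => //= x X IH /andP [nx ux] p q; rewrite !inE.
move=> /orP [/eqP ->|pX] /orP [/eqP ->|qX] //= e.
- by move: nx; rewrite e (map_f fst qX).
- by move: nx; rewrite -e (map_f fst pX).
- exact: IH.
Qed.

Lemma bin2_nat (n : nat) : ('C(n, 2) * 2 = n * (n - 1))%N.
Proof.
elim: n => [//|n IH]; rewrite binS bin1 mulnDl IH; case: n IH => [//|n] _; nia.
Qed.

Lemma bin2_R (n : nat) : (0 < n)%N ->
  ('C(n, 2))%:R * 2 = n%:R * (n%:R - 1) :> R.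
Proof.
move=> hn; have := congr1 (fun x : nat => x%:R : R) (bin2_nat n).
by rewrite /= !natrM natrB.
Qed.

Lemma sum_const_seq (Y : seq pt2) (c : R) : \sum_(p <- Y) c = (size Y)%:R * c.
Proof.
rewrite -sum1_size mulr_suml; apply: eq_bigr => p _; by rewrite mul1r.
Qed.

Lemma npairs_le (Y : seq pt2) (s : R) : uniq (map fst Y) ->
  (npairs_below Y s <= size Y * size Y)%N.
Proof.
move=> hu; rewrite npairs_count //.
apply: (@leq_trans (\sum_(p <- Y) size Y)%N).
  by apply: leq_sum => p _; exact: count_size.
by rewrite big_const_seq count_predT iter_addn_0.
Qed.

Lemma rho_psi (Y : seq pt2) (s eps : R) : (2 <= size Y)%N ->
  (size Y)%:R^-1 <= eps ->
  (npairs_below Y s <= size Y * size Y)%N ->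
  `|rho Y s - 2 * ((npairs_below Y s)%:R / ((size Y)%:R * (size Y)%:R))|
    <= 4 * eps.
Proof.
move=> h2 he hN.
rewrite /rho RdivE.
have hC := @bin2_R (size Y) (ltnW h2).
have hn2 : 2 <= (size Y)%:R :> R by rewrite (ler_nat R 2).
have hNR : (npairs_below Y s)%:R <= (size Y)%:R * (size Y)%:R :> R.
  by rewrite -natrM ler_nat.
have hN0 : 0 <= (npairs_below Y s)%:R :> R := ler0n _ _.
set N := (npairs_below Y s)%:R in hNR hN0 *.
set n := (size Y)%:R in he hC hn2 hNR *.
set c := ('C(size Y, 2))%:R in hC *.
have npos : 0 < n by lra.
have hc : c = n * (n - 1) / 2.
  by rewrite -hC; field.
have h1 : 1 <= eps * n.
  have := ler_wpM2r (ltW npos) he; rewrite mulVf //; lra.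
rewrite hc.
have -> : N / (n * (n - 1) / 2) - 2 * (N / (n * n)) = 2 * N / (n * n * (n - 1)).
  field; apply/andP; split; apply/eqP; lra.
have hd : 0 < n * n * (n - 1) by apply: mulr_gt0; [apply: mulr_gt0|]; lra.
rewrite ger0_norm; last by apply: divr_ge0; [lra | exact: ltW].
rewrite ler_pdivrMr //.
have h3 : 4 * (n * (n - 1)) <= 4 * eps * (n * n * (n - 1)).
  have hp : 0 <= 4 * (n * (n - 1)) by apply: mulr_ge0; [|apply: mulr_ge0]; lra.
  have := ler_wpM2r hp h1; rewrite mul1r => h.
  by have -> : 4 * eps * (n * n * (n - 1)) = eps * n * (4 * (n * (n - 1))) by ring.
nra.
Qed.

Lemma psi_bound (s eps : R) (A X : seq pt2) (k : nat) :
  (0 < size A)%N -> (0 < size X)%N -> (0 < k)%N -> {subset A <= X} ->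
  eps_approx eps A X ->
  `|(\sum_(p <- A) (count (Dq s p) A)%:R) / ((size A)%:R * (size A)%:R)
    - (\sum_(p <- X) (count (Dq s p) X)%:R) / ((size X)%:R * (size X)%:R)|
    <= eps + ((k.+1 * k.+1)%:R * eps + 4 / k%:R).
Proof.
move=> hm hn hk sub Hap.
have G := @grid_bound s eps A X k hm hn hk sub Hap.
have hm' : 0 < (size A)%:R :> R by rewrite ltr0n.
have hn' : 0 < (size X)%:R :> R by rewrite ltr0n.
have T1 : `|\sum_(p <- A) ((count (Dq s p) A)%:R / (size A)%:R
            - (count (Dq s p) X)%:R / (size X)%:R)| <= (size A)%:R * eps.
  rewrite -sum_const_seq; apply: le_trans (ler_norm_sum _ _ _) _.
  apply: ler_sum => p _.
  have Hc1 : convexR (fun v => p.1 < v).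
    by move=> a b c hab hbc ha hc; exact: lt_le_trans ha hab.
  have Hc2 : convexR (fun v => v < yp s p).
    by move=> a b c hab hbc ha hc; exact: le_lt_trans hbc hc.
  exact (@approx_conv s eps A X _ _ Hc1 Hc2 sub Hap).
have EG : forall Y, \sum_(p <- Y) gX s X p =
    (\sum_(p <- Y) (count (Dq s p) X)%:R) / (size X)%:R.
  by move=> Y; rewrite mulr_suml.
rewrite !EG in G.
rewrite sumrB -!mulr_suml in T1.
set SAA := \sum_(p <- A) (count (Dq s p) A)%:R in T1 *.
set SAX := \sum_(p <- A) (count (Dq s p) X)%:R in T1 G *.
set SXX := \sum_(p <- X) (count (Dq s p) X)%:R in G *.
set m := (size A)%:R in hm' T1 G *.
set n := (size X)%:R in hn' T1 G *.
have T1' : `|(SAA / m - SAX / n) / m| <= eps.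
  rewrite normrM [`|_^-1|]ger0_norm; last by rewrite invr_ge0 ltW.
  by rewrite ler_pdivrMr // [eps * _]mulrC.
have -> : SAA / (m * m) - SXX / (n * n) =
   (SAA / m - SAX / n) / m + (SAX / n / m - SXX / n / n).
  by field; apply/andP; split; apply/eqP; lra.
apply: le_trans (ler_normD _ _) _.
lra.
Qed.

Theorem mainTheorem6 :
  exists C : R, forall (eps : R) (X A : seq pt2),
    0 < eps -> eps <= 1 ->
    uniq (map fst X) ->
    uniq A -> {subset A <= X} ->
    eps_approx eps A X ->
    (2 <= size A)%N -> eps^-1 <= (size A)%:R ->
    forall s : R, `| rho X s - rho A s | <= C * eps `^ (3%:R^-1).
Proof.
exists 40 => eps X A he0 he1 hux huA sub Hap hm hinv s.
have hmn : (size A <= size X)%N := uniq_leq_size huA sub.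
have huxA : uniq (map fst A).
  rewrite map_inj_in_uniq // => p q pA qA.
  exact: (@uniq_fst_inj X hux p q (sub _ pA) (sub _ qA)).
have hm0 : (0 < size A)%N by apply: leq_trans hm.
have hn2 : (2 <= size X)%N := leq_trans hm hmn.
have hn0 : (0 < size X)%N by apply: leq_trans hn2.
have hmR : 0 < (size A)%:R :> R by rewrite ltr0n.
have hnR : 0 < (size X)%:R :> R by rewrite ltr0n.
have hmn' : (size A)%:R <= (size X)%:R :> R by rewrite ler_nat.
have h1m : 1 <= eps * (size A)%:R.
  have := ler_wpM2l (ltW he0) hinv; rewrite mulfV //; exact: lt0r_neq0.
have h1n : 1 <= eps * (size X)%:R.
  have := ler_wpM2l (ltW he0) hmn'; lra.
have hinvA : (size A)%:R^-1 <= eps.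
  by rewrite -[_^-1]mul1r ler_pdivrMr // mulrC.
have hinvX : (size X)%:R^-1 <= eps.
  by rewrite -[_^-1]mul1r ler_pdivrMr // mulrC.
set e3 := eps `^ _.
have e3pos : 0 < e3 := powR_gt0 _ he0.
have e3cube : e3 * (e3 * e3) = eps.
  have : e3 ^+ 3 = eps.
    rewrite /e3 -powR_mulrn; last exact: powR_ge0.
    by rewrite -powRrM mulVf ?pnatr_eq0 // powRr1 // ltW.
  by rewrite !exprS expr0 mulr1.
have e3le1 : e3 <= 1 by nra.
have epse3 : eps <= e3 by nra.
set t := e3^-1.
have te3 : t * e3 = 1 by rewrite mulVf // lt0r_neq0.
have tpos : 0 < t by rewrite invr_gt0.
have ht1 : 1 <= t by nra.
set k := Num.trunc t.
have hk1 : k%:R <= t by rewrite truncn_le ltW.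
have hk2 : t < k.+1%:R by rewrite -truncn_le_nat.
have hk0 : (0 < k)%N.
  rewrite lt0n; apply/negP => /eqP k0.
  by move: hk2; rewrite k0; lra.
have hK1 : 1 <= k%:R :> R by rewrite ler1n.
have Ek : k.+1%:R = k%:R + 1 :> R by rewrite -addn1 natrD.
rewrite Ek in hk2.
set K := k%:R in hk1 hk2 hK1 Ek *.
have B1 : (K + 1) * (K + 1) * eps <= 4 * e3.
  have hsq : (K + 1) * (K + 1) <= 4 * (t * t) by nra.
  have := ler_wpM2r (ltW he0) hsq.
  have -> : 4 * (t * t) * eps = 4 * e3.
    rewrite -e3cube.
    have -> : 4 * (t * t) * (e3 * (e3 * e3)) = 4 * (t * e3) * (t * e3) * e3.
      by ring.
    by rewrite te3 !mulr1.
  by [].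
have B2 : 4 / K <= 8 * e3.
  have Kpos : 0 < K by lra.
  rewrite ler_pdivrMr //; nra.
have HrX := @rho_psi X s eps hn2 hinvX (@npairs_le X s hux).
have HrA := @rho_psi A s eps hm hinvA (@npairs_le A s huxA).
have HP := @psi_bound s eps A X k hm0 hn0 hk0 sub Hap.
rewrite natrM Ek in HP.
rewrite (@npairs_count X s hux) natr_sum in HrX.
rewrite (@npairs_count A s huxA) natr_sum in HrA.
move: HrX HrA HP; rewrite !ler_norml => /andP [a1 a2] /andP [b1 b2] /andP [c1 c2].
apply/andP; split; lra.
Qed.
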